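(* Let $X$ be a topological space, let $Y$ be a Urysohn space, let $S$ be a dense subset of $X$ and let $f:S\to Y$ be a $\theta$-continuous map. Then the following are equivalent: (1) $f$ has a $\theta$-continuous extension to $X$; (2) both of the following hold: $(+)$ for every family $\{A_\beta\}$ of subsets of $Y$ with $\bigcap_\beta \mathrm{cl}_\theta A_\beta=\emptyset$ one has $\bigcap_\beta\overline{f^{-1}(A_\beta)}=\emptyset$ (closures in $X$); and $(++)$ for every open set $W$ of $Y$ there is an open set $V$ of $X$ with $X_\theta(f^{-1}(W))\subseteq V\subseteq X_\theta(f^{-1}(\overline W))$.
   Context: A Urysohn space is one in which any two distinct points have open neighborhoods with disjoint closures. A map $g:T\to Y$ is $\theta$-continuous if for every $t\in T$ and every open neighborhood $U$ of $g(t)$ there is a neighborhood $W$ of $t$ with $g(W)\subseteq\overline U$ (for $f:S\to Y$, $S$ carries the subspace topology). For $M\subseteq Y$, $\mathrm{cl}_\theta M$ is the set of $y\in Y$ with $\mathrm{cl}\,U\cap M\neq\emptyset$ for every open $U\ni y$. $\mathcal N(x)$ is the set of open neighborhoods of $x$ in $X$. For $V\subseteq Y$, $X_\theta(f^{-1}(V))$ is the set of points $x\in X$ with $\bigcap\{\mathrm{cl}_\theta f(P\cap S):P\in\mathcal N(x)\}\subseteq V$. *)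

(* Defs.v *)
From mathcomp Require Import all_boot all_classical topology.
Set Implicit Arguments. Unset Strict Implicit. Unset Printing Implicit Defensive.
Local Open Scope classical_set_scope.

Definition urysohn (Y : topologicalType) : Prop :=
  forall y1 y2 : Y, y1 <> y2 ->
    exists U V : set Y, [/\ open U, open V, U y1, V y2 &
                           closure U `&` closure V = set0].

Definition cl_theta (Y : topologicalType) (M : set Y) : set Y :=
  [set y | forall U : set Y, open U -> U y -> closure U `&` M !=set0].

Definition theta_continuous (X Y : topologicalType) (g : X -> Y) : Prop :=
  forall (t : X) (U : set Y), open U -> U (g t) ->
    exists W : set X, [/\ open W, W t & g @` W `<=` closure U].

(* theta-continuity of f restricted to S (S carries the subspace topology:
   its open neighbourhoods of t are the W `&` S with W open in X, W t) *)
Definition theta_continuous_on (X Y : topologicalType) (S : set X) (f : X -> Y) : Prop :=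
  forall (t : X) (U : set Y), S t -> open U -> U (f t) ->
    exists W : set X, [/\ open W, W t & f @` (W `&` S) `<=` closure U].

(* X_theta(f^{-1}(V)) *)
Definition Xtheta (X Y : topologicalType) (S : set X) (f : X -> Y) (V : set Y) : set X :=
  [set x | \bigcap_(P in [set P : set X | open P /\ P x])
              cl_theta (f @` (P `&` S)) `<=` V].

(* Main.v *)
Require Import Defs.
From mathcomp Require Import all_boot all_classical topology.
Local Open Scope classical_set_scope.

Section Aux.
Context (X Y : topologicalType).

Lemma closure_openP (A : set X) p :
  closure A p <-> (forall B, open B -> B p -> A `&` B !=set0).
Proof.
split.
  move=> H B oB Bp; apply: H; apply: open_nbhs_nbhs; by split.
move=> H B; rewrite nbhsE => -[C [oC Cp] CB].
have [q [Aq Cq]] := H C oC Cp; exists q; split => //; exact: CB.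
Qed.

Lemma cl_thetaT (y : Y) : cl_theta setT y.
Proof. move=> U oU Uy; exists y; split => //; exact: subset_closure. Qed.

Lemma theta_sep (y z : Y) : urysohn Y -> z <> y ->
  exists U, [/\ open U, U y & ~ cl_theta (closure U) z].
Proof.
move=> uY zy; have [O [U [oO oU Oz Uy OU]]] := uY z y zy.
exists U; split => // H; have [w [cw1 cw2]] := H O oO Oz.
have : (closure O `&` closure U) w by [].
by rewrite OU.
Qed.
End Aux.

Theorem corollary4p3 (X Y : topologicalType) (S : set X) (f : X -> Y) :
  urysohn Y -> dense S -> theta_continuous_on S f ->
  (exists g : X -> Y, theta_continuous g /\ (forall s, S s -> g s = f s)) <->
  ((forall (I : Type) (A : I -> set Y),
       \bigcap_(i in [set: I]) cl_theta (A i) = set0 ->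
       \bigcap_(i in [set: I]) closure (S `&` f @^-1` A i) = set0) /\
   (forall W : set Y, open W ->
       exists V : set X, [/\ open V, Xtheta S f W `<=` V &
                             V `<=` Xtheta S f (closure W)])).
Proof.
move=> uY dS _.
pose Ix (x : X) (y : Y) := forall P, open P -> P x -> cl_theta (f @` (P `&` S)) y.
have XthE : forall W x, Xtheta S f W x <-> (forall y, Ix x y -> W y).
  move=> W x; split.
    move=> H y Iy; apply: H => P [oP Px]; exact: Iy.
  move=> H y Iy; apply: H => P oP Px; exact: Iy.
split.
- move=> [g [gc gS]].
  have Ig : forall x y, Ix x y <-> y = g x.
    move=> x y; split.
      move=> Iy; have [//|ng] := pselect (y = g x); exfalso.
      have [U [U' [oU oU' Uy Ugx UU']]] := uY y (g x) ng.
      have [P [oP Px gP]] := gc x U' oU' Ugx.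
      have [w [clw [s [Ps Ss] fsw]]] := Iy P oP Px U oU Uy.
      have : (closure U `&` closure U') w.
        split => //; apply: gP; exists s => //; rewrite gS //.
      by rewrite UU'; case.
    move=> -> P oP Px U oU Ugx.
    have [W [oW Wx gW]] := gc x U oU Ugx.
    have [s [[Ws Ps] Ss]] : (W `&` P) `&` S !=set0.
      apply: dS; [by exists x | exact: openI].
    exists (f s); split; last by exists s.
    rewrite -gS //; apply: gW; by exists s.
  split.
  + move=> I A H; apply/seteqP; split => // x Hx.
    suff : (\bigcap_(i in [set: I]) cl_theta (A i)) (g x) by rewrite H.
    move=> i _.
    move=> U oU Ugx.
    have [W [oW Wx gW]] := gc x U oU Ugx.
    have [s [[Ss Afs] Ws]] := (@closure_openP X _ x).1 (Hx i Logic.I) W oW Wx.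
    exists (f s); split => //; rewrite -gS //; apply: gW; by exists s.
  + move=> W oW.
    exists (\bigcup_(P in [set P | open P /\ g @` P `<=` closure W]) P); split.
    * apply: bigcup_open => P [] //.
    * move=> x /XthE H; have gxW : W (g x) by apply: H; apply/Ig.
      have [P [oP Px gP]] := gc x W oW gxW.
      by exists P.
    * move=> z [P [oP gP] Pz]; apply/XthE => y /Ig ->; apply: gP; by exists z.
- move=> [Hp Hpp].
  have Iex : forall x, exists y, Ix x y.
    move=> x; have [//|nE] := pselect (exists y, Ix x y); exfalso.
    pose A := fun P : set X => [set y | open P /\ P x -> (f @` (P `&` S)) y].
    have H1 : \bigcap_(i in [set: set X]) cl_theta (A i) = set0.
      apply/seteqP; split => // y Hy; apply: nE; exists y => P oP Px U oU Uy.
      have [w [cw Aw]] := Hy P I U oU Uy.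
      by exists w; split => //; apply: Aw.
    suff : (\bigcap_(i in [set: set X]) closure (S `&` f @^-1` A i)) x.
      by rewrite (Hp _ A H1).
    move=> P _.
    apply/closure_openP => Q oQ Qx.
    have [[oP Px]|nP] := pselect (open P /\ P x).
      have [s [[Ps Qs] Ss]] : (P `&` Q) `&` S !=set0.
        apply: dS; [by exists x | exact: openI].
      exists s; split => //; split => // _; by exists s.
    have [s [Qs Ss]] : Q `&` S !=set0 by apply: dS => //; exists x.
    by exists s; split => //; split => // H; exfalso; apply: nP.
  have Iun : forall x y1 y2, Ix x y1 -> Ix x y2 -> y1 = y2.
    move=> x y1 y2 I1 I2; have [//|n12] := pselect (y1 = y2); exfalso.
    pose A := fun U : set Y =>
      [set y | open U /\ (U y1 \/ U y2) -> closure U y].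
    have H1 : \bigcap_(i in [set: set Y]) cl_theta (A i) = set0.
      apply/seteqP; split => // z Hz.
      have [zy1|zy1] := pselect (z = y1).
        have zy2 : z <> y2 by move=> e; apply: n12; rewrite -zy1.
        have [U [oU Uy Hn]] := @theta_sep Y _ _ uY zy2; apply: Hn.
        move=> O oO Oz; have [w [cw Aw]] := Hz U I O oO Oz.
        by exists w; split => //; apply: Aw; split => //; right.
      have [U [oU Uy Hn]] := @theta_sep Y _ _ uY zy1; apply: Hn.
      move=> O oO Oz; have [w [cw Aw]] := Hz U I O oO Oz.
      by exists w; split => //; apply: Aw; split => //; left.
    suff : (\bigcap_(i in [set: set Y]) closure (S `&` f @^-1` A i)) x.
      by rewrite (Hp _ A H1).
    move=> U _.
    apply/closure_openP => Q oQ Qx.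
    have [[oU Uy]|nU] := pselect (open U /\ (U y1 \/ U y2)).
      have [w [cw [s [Qs Ss] fsw]]] : closure U `&` f @` (Q `&` S) !=set0.
        by case: Uy => Uy; [apply: I1 | apply: I2].
      by exists s; split => //; split => // _; rewrite fsw.
    have [s [Qs Ss]] : Q `&` S !=set0 by apply: dS => //; exists x.
    by exists s; split => //; split => // H; exfalso; apply: nU.
  pose g x := projT1 (cid (Iex x)).
  have gI : forall x, Ix x (g x) by move=> x; exact: (projT2 (cid (Iex x))).
  exists g; split.
  + move=> t U oU Ugt.
    have [V [oV HV1 HV2]] := Hpp U oU.
    exists V; split => //.
      apply: HV1; apply/XthE => y Iy; by rewrite (Iun _ _ _ Iy (gI t)).
    move=> _ [z Vz <-]; have := HV2 z Vz; move/XthE; apply; exact: gI.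
  + move=> s Ss; apply: Iun (gI s) _ => P oP Ps U oU Ufs.
    exists (f s); split; [exact: subset_closure | by exists s].
Qed.
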